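(* If $\Gamma\rhd_{\diamond} \Delta$ then $\mathrm{var}(\Gamma')=\mathrm{var}(\Delta')$ for some $\Gamma'\subseteq \Gamma$, $\Delta'\subseteq \Delta$.
   Context: A $\Sigma$-Nmatrix $\mathbb{M}=\langle V,\cdot_{\mathbb{M}},D\rangle$ has truth-values $V$, designated values $D\subseteq V$, and interprets each $n$-ary connective as a multi-function $V^n\to\wp(V)\setminus\emptyset$. An $\mathbb{M}$-valuation is a map $v$ from formulas to $V$ with $v(\copyright(\varphi_1,\ldots,\varphi_k))\in\copyright_{\mathbb{M}}(v(\varphi_1),\ldots,v(\varphi_k))$. The (multiple-conclusion, Scottian) logic $\rhd_{\mathbb{M}}$ is defined by $\Gamma\rhd_{\mathbb{M}}\Delta$ iff every $\mathbb{M}$-valuation with $v(\Gamma)\subseteq D$ has $v(\Delta)\cap D\neq\emptyset$. Let $\Sigma_\diamond$ contain a single binary connective $\diamond$ (platypus), and let $\mathbb{B}_\diamond=\langle\{0,1\},\cdot,\{1\}\rangle$ interpret it by $\diamond(0,0)=\{0\}$, $\diamond(1,1)=\{1\}$, $\diamond(0,1)=\diamond(1,0)=\{0,1\}$ (i.e. $\diamond(x,y)=\{x\land y,x\lor y\}$). $\rhd_\diamond$ denotes $\rhd_{\mathbb{B}_\diamond}$, and $\mathrm{var}(\Gamma)$ is the set of propositional variables occurring in $\Gamma$. *)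

(* Defs.v *)
From Stdlib Require Import Arith.

Inductive form : Type :=
| Var : nat -> form
| Plat : form -> form -> form.

(* Truth values V = {0,1} represented by bool; D = {true}. *)
Definition designated (x : bool) : Prop := x = true.

Definition diamond_M (x y z : bool) : Prop := z = andb x y \/ z = orb x y.

Definition valuation (v : form -> bool) : Prop :=
  forall a b, diamond_M (v a) (v b) (v (Plat a b)).

Definition fset := form -> Prop.

Definition cons_diamond (Gamma Delta : fset) : Prop :=
  forall v, valuation v ->
    (forall g, Gamma g -> designated (v g)) ->
    exists d, Delta d /\ designated (v d).

Fixpoint occurs (p : nat) (f : form) : Prop :=
  match f with
  | Var q => p = q
  | Plat a b => occurs p a \/ occurs p b
  end.

Definition var (Gamma : fset) : nat -> Prop :=
  fun p => exists g, Gamma g /\ occurs p g.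

Definition subset (A B : fset) : Prop := forall f, A f -> B f.

(* Main.v *)
Require Import Defs.
From Stdlib Require Import Classical ClassicalEpsilon.

Definition le (P Q : nat -> Prop) := forall p, Q p -> P p.

Inductive tower (F : (nat -> Prop) -> (nat -> Prop)) : (nat -> Prop) -> Prop :=
| tF : forall P, tower F P -> tower F (F P)
| tI : forall S : (nat -> Prop) -> Prop, (forall P, S P -> tower F P) ->
         tower F (fun p => forall P, S P -> P p).

Lemma le_trans a b c : le a b -> le b c -> le a c.
Proof. unfold le; auto. Qed.

Lemma lemma1 F (mono : forall P Q, le P Q -> le (F P) (F Q))
  (infl : forall P, le P (F P)) c
  (ext : forall x, tower F x -> le x c -> le c x \/ le (F x) c) :
  forall x, tower F x -> le x c \/ le (F c) x.
Proof.
  induction 1 as [y Ty IH | S HS IH].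
  - destruct IH as [H|H].
    + destruct (ext y Ty H) as [H'|H'].
      * right. apply mono; exact H'.
      * left; exact H'.
    + right. eapply le_trans; [exact H| apply infl].
  - destruct (classic (exists s, S s /\ le (F c) s)) as [[s [Ss Hs]]|N].
    + right. intros p Hp. apply Hs. apply Hp; exact Ss.
    + left. intros p Hp P SP. destruct (IH P SP) as [H|H].
      * apply H; exact Hp.
      * exfalso; apply N; exists P; auto.
Qed.

Lemma ext_all F (mono : forall P Q, le P Q -> le (F P) (F Q))
  (infl : forall P, le P (F P)) :
  forall c, tower F c -> forall x, tower F x -> le x c -> le c x \/ le (F x) c.
Proof.
  induction 1 as [d Td IH | S HS IH]; intros x Tx Hx.
  - destruct (lemma1 F mono infl d IH x Tx) as [H|H].
    + right. apply mono; exact H.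
    + left; exact H.
  - destruct (classic (exists s, S s /\ le x s /\ le (F x) s)) as [[s [Ss [_ Hs]]]|N].
    + right. intros p Hp. apply Hs. apply Hp; exact Ss.
    + left. intros p Hp P SP.
      destruct (lemma1 F mono infl P (IH P SP) x Tx) as [H|H].
      * destruct (IH P SP x Tx H) as [H'|H'].
        -- apply H'; exact Hp.
        -- exfalso; apply N; exists P; auto.
      * apply (le_trans _ _ _ (infl P) H); exact Hp.
Qed.

Lemma chain F (mono : forall P Q, le P Q -> le (F P) (F Q))
  (infl : forall P, le P (F P)) x y :
  tower F x -> tower F y -> le x y \/ le y x.
Proof.
  intros Tx Ty.
  destruct (lemma1 F mono infl y (ext_all F mono infl y Ty) x Tx) as [H|H].
  - left; exact H.
  - right. eapply le_trans; [apply infl | exact H].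
Qed.

Definition restr (G : fset) (P : nat -> Prop) : fset :=
  fun g => G g /\ forall p, occurs p g -> P p.

Definition FF (G D : fset) (P : nat -> Prop) : nat -> Prop :=
  fun p => var (restr G P) p /\ var (restr D P) p.

Lemma FF_mono G D : forall P Q, le P Q -> le (FF G D P) (FF G D Q).
Proof.
  unfold le, FF, var, restr. intros P Q H p [[g [[Gg Hg] Og]] [d [[Dd Hd] Od]]].
  split; [exists g | exists d]; repeat split; auto.
Qed.

Lemma FF_infl G D : forall P, le P (FF G D P).
Proof.
  unfold le, FF, var, restr. intros P p [[g [[Gg Hg] Og]] _]. auto.
Qed.

Definition bc (P : Prop) : bool :=
  if excluded_middle_informative P then true else false.

Lemma diamond_ok (x y z : bool) : (z = x \/ z = y) -> diamond_M x y z.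
Proof. unfold diamond_M; destruct x, y, z; simpl; intuition congruence. Qed.

Theorem proposition2 (Gamma Delta : fset) :
  cons_diamond Gamma Delta ->
  exists Gamma' Delta' : fset,
    subset Gamma' Gamma /\ subset Delta' Delta /\
    (exists g, Gamma' g) /\ (exists d, Delta' d) /\
    (forall p, var Gamma' p <-> var Delta' p).
Proof.
  intros Hc.
  set (F := FF Gamma Delta).
  destruct (classic (exists P : nat -> Prop, (exists p, P p) /\ le (F P) P))
    as [[P [[p0 Hp0] HP]] | N].
  - exists (restr Gamma P), (restr Delta P).
    assert (Hf := HP p0 Hp0). destruct Hf as [[g [Hg _]] [d [Hd _]]].
    split; [intros f [Hf _]; exact Hf|].
    split; [intros f [Hf _]; exact Hf|].
    split; [exists g; exact Hg|].
    split; [exists d; exact Hd|].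
    intros p; split; intros [f [[Hf Hall] Ho]].
    + apply (HP p). apply Hall; exact Ho.
    + apply (HP p). apply Hall; exact Ho.
  - exfalso.
    set (Tp := fun p q => forall T, (tower F T /\ T p) -> T q).
    assert (Ttow : forall p, tower F (Tp p)).
    { intro p. apply tI. intros T [HT _]; exact HT. }
    assert (Tpp : forall p, Tp p p) by (intros p T [_ HT]; exact HT).
    assert (notF : forall p, ~ F (Tp p) p).
    { intros p Hp. apply N. exists (Tp p). split; [exists p; apply Tpp|].
      intros q Hq. apply Hq. split; [apply tF, Ttow | exact Hp]. }
    assert (ch : forall p q, le (Tp p) (Tp q) \/ le (Tp q) (Tp p)).
    { intros p q. apply (chain F); [apply FF_mono | apply FF_infl | apply Ttow | apply Ttow]. }
    set (w := fix w (f : form) : nat :=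
      match f with
      | Var p => p
      | Plat a b => if excluded_middle_informative
                         (forall q, occurs q b -> Tp (w a) q)
                    then w a else w b
      end).
    assert (wP : forall f, occurs (w f) f /\ forall q, occurs q f -> Tp (w f) q).
    { induction f as [p | a [IHa1 IHa2] b [IHb1 IHb2]]; simpl.
      - split; [reflexivity|]. intros q Hq; subst q; apply Tpp.
      - destruct (excluded_middle_informative
                    (forall q, occurs q b -> Tp (w a) q)) as [H|H].
        + split; [left; exact IHa1|]. intros q [Hq|Hq]; auto.
        + split; [right; exact IHb1|].
          destruct (ch (w a) (w b)) as [L|L].
          * exfalso; apply H. intros q Hq. apply L, IHb2, Hq.
          * intros q [Hq|Hq]; auto. }
    set (c := fun p => bc (var (restr Gamma (Tp p)) p)).
    set (v := fun f => c (w f)).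
    destruct (Hc v) as [d [Dd Hd]].
    + intros a b. apply diamond_ok. unfold v. simpl.
      destruct (excluded_middle_informative _); auto.
    + intros g Gg. unfold v, c, bc, designated.
      destruct (excluded_middle_informative _) as [_|H]; auto.
      exfalso; apply H. destruct (wP g) as [W1 W2].
      exists g. split; [split; auto | exact W1].
    + unfold designated, v, c, bc in Hd.
      destruct (excluded_middle_informative _) as [H|_]; [|discriminate].
      apply (notF (w d)). split; [exact H|].
      destruct (wP d) as [W1 W2]. exists d. split; [split; auto | exact W1].
Qed.
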